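(* Let $L$ be a sharp C-lattice and $p\in L$ a prime element. Then the localization $L_p$ is sharp.
   Context: A multiplicative lattice is a complete lattice $(L,\le)$ with bottom $0$ and top $1$ which is also a commutative monoid with identity $1$ such that $a(\bigvee_\alpha b_\alpha)=\bigvee_\alpha(ab_\alpha)$ for all $a,b_\alpha\in L$. An element $c$ is compact if $c\le\bigvee S$ implies $c\le\bigvee T$ for some finite $T\subseteq S$. A C-lattice is a multiplicative lattice in which $1$ is compact, the product of two compact elements is compact, and every element is a join of compact elements; let $L^*$ denote its set of compact elements. A proper element $p\neq1$ is prime if $xy\le p$ implies $x\le p$ or $y\le p$. For $p$ prime and $x\in L$, $x_p=\bigvee\{a\in L^*: as\le x \text{ for some } s\in L^* \text{ with } s\not\le p\}$, and $L_p=\{x_p: x\in L\}$ is a lattice with multiplication $(x,y)\mapsto(xy)_p$, join $\{b_\alpha\}\mapsto(\bigvee b_\alpha)_p$ and meet $\{b_\alpha\}\mapsto(\bigwedge b_\alpha)_p$. A lattice $M$ is sharp if whenever $a_1a_2\le b$ in $M$, there exist $b_1,b_2\in M$ with $a_i\le b_i$ ($i=1,2$) and $b=b_1b_2$. *)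

(* Defs.v *)
From Stdlib Require Import List.

(* The bottom 0 is [sup (fun _ => False)]; meets exist by completeness. *)
Record MultLattice := {
  carrier :> Type;
  le : carrier -> carrier -> Prop;
  sup : (carrier -> Prop) -> carrier;
  mul : carrier -> carrier -> carrier;
  one : carrier;
  le_refl : forall x, le x x;
  le_trans : forall x y z, le x y -> le y z -> le x z;
  le_antisym : forall x y, le x y -> le y x -> x = y;
  sup_ub : forall (S : carrier -> Prop) x, S x -> le x (sup S);
  sup_least : forall (S : carrier -> Prop) y,
      (forall x, S x -> le x y) -> le (sup S) y;
  mul_comm : forall x y, mul x y = mul y x;
  mul_assoc : forall x y z, mul x (mul y z) = mul (mul x y) z;
  mul_one : forall x, mul one x = x;
  le_one : forall x, le x one;
  mul_sup : forall a (S : carrier -> Prop),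
      mul a (sup S) = sup (fun y => exists b, S b /\ y = mul a b)
}.

Arguments le {_} _ _.
Arguments sup {_} _.
Arguments mul {_} _ _.
Arguments one {_}.

Section Defs.
Variable L : MultLattice.

Definition compact (c : L) : Prop :=
  forall S : L -> Prop, le c (sup S) ->
    exists T : list L, (forall x, In x T -> S x) /\ le c (sup (fun x => In x T)).

Definition C_lattice : Prop :=
  compact one /\
  (forall a b, compact a -> compact b -> compact (mul a b)) /\
  (forall x : L, x = sup (fun c => compact c /\ le c x)).

Definition prime_el (p : L) : Prop :=
  p <> one /\ forall x y : L, le (mul x y) p -> le x p \/ le y p.

Definition loc (p x : L) : L :=
  sup (fun a => compact a /\
        exists s, compact s /\ le (mul a s) x /\ ~ le s p).

Definition in_loc (p y : L) : Prop := exists x, y = loc p x.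

Definition sharp_on (M : L -> Prop) (m : L -> L -> L) : Prop :=
  forall a1 a2 b, M a1 -> M a2 -> M b -> le (m a1 a2) b ->
    exists b1 b2, M b1 /\ M b2 /\ le a1 b1 /\ le a2 b2 /\ b = m b1 b2.

Definition sharp : Prop := sharp_on (fun _ => True) mul.

Definition loc_sharp (p : L) : Prop :=
  sharp_on (in_loc p) (fun x y => loc p (mul x y)).

End Defs.

(* Main.v *)
Require Import Defs.
From Stdlib Require Import List.

Lemma mul_mono_r (L : MultLattice) (a x y : L) : le x y -> le (mul a x) (mul a y).
Proof.
  intro H.
  assert (E : y = sup (fun z => z = x \/ z = y)).
  { apply le_antisym.
    - apply sup_ub; auto.
    - apply sup_least. intros z [-> | ->]; auto using le_refl. }
  rewrite E, mul_sup. apply sup_ub. exists x; auto.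
Qed.

Lemma mul_mono_l (L : MultLattice) (a x y : L) : le x y -> le (mul x a) (mul y a).
Proof. intro H. rewrite (mul_comm _ x a), (mul_comm _ y a). now apply mul_mono_r. Qed.

Lemma mul_mono2 (L : MultLattice) (a b x y : L) : le a x -> le b y -> le (mul a b) (mul x y).
Proof.
  intros H1 H2. eapply le_trans. apply mul_mono_l; eauto. apply mul_mono_r; auto.
Qed.

Lemma mul_le_r (L : MultLattice) (a b : L) : le (mul a b) a.
Proof.
  rewrite mul_comm. eapply le_trans. apply mul_mono_l, le_one. rewrite mul_one. apply le_refl.
Qed.

Lemma mul_le_l (L : MultLattice) (a b : L) : le (mul a b) b.
Proof. rewrite mul_comm. apply mul_le_r. Qed.

Lemma one_not_le (L : MultLattice) (p : L) : prime_el L p -> ~ le one p.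
Proof. intros [Hp _] H. apply Hp. apply le_antisym; auto using le_one. Qed.

Lemma prod_not_le (L : MultLattice) (p s t : L) : prime_el L p -> ~ le s p -> ~ le t p -> ~ le (mul s t) p.
Proof. intros [_ Hp] Hs Ht H. destruct (Hp _ _ H); auto. Qed.

Lemma decomp (L : MultLattice) (y z : L) : C_lattice L ->
  (forall c, compact L c -> le c y -> le c z) -> le y z.
Proof.
  intros (_ & _ & Hd) H. rewrite (Hd y). apply sup_least. intros c [Hc Hcy]. auto.
Qed.

Lemma list_D (L : MultLattice) (p x : L) : C_lattice L -> prime_el L p ->
  forall T : list L, (forall t, In t T -> compact L t /\
        exists s, compact L s /\ le (mul t s) x /\ ~ le s p) ->
  exists s, compact L s /\ ~ le s p /\ le (mul (sup (fun y => In y T)) s) x.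
Proof.
  intros HC Hp. induction T as [|t T IH]; intro HT.
  - exists one. destruct HC as (H1 & _). repeat split; auto using one_not_le.
    rewrite mul_comm, mul_one. apply sup_least. intros y [].
  - destruct IH as (s' & Hs'c & Hs'p & Hs'x).
    { intros u Hu. apply HT. now right. }
    destruct (HT t (or_introl eq_refl)) as (_ & st & Hstc & Hstx & Hstp).
    exists (mul s' st). destruct HC as (_ & Hm & _).
    repeat split; auto using prod_not_le.
    rewrite mul_comm, mul_sup. apply sup_least. intros z (y & Hy & ->).
    destruct Hy as [<- | Hy].
    + eapply le_trans; [| exact Hstx]. rewrite (mul_comm _ t st).
      apply mul_mono_l, mul_le_l.
    + eapply le_trans; [| exact Hs'x]. rewrite (mul_comm _ _ y).
      apply mul_mono2; [apply sup_ub; auto | apply mul_le_r].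
Qed.

Lemma F (L : MultLattice) (p x a : L) : C_lattice L -> prime_el L p ->
  compact L a -> le a (loc L p x) ->
  exists s, compact L s /\ ~ le s p /\ le (mul a s) x.
Proof.
  intros HC Hp Ha H. destruct (Ha _ H) as (T & HT & HaT).
  destruct (list_D L p x HC Hp T HT) as (s & Hs1 & Hs2 & Hs3).
  exists s. repeat split; auto. eapply le_trans; [| exact Hs3]. now apply mul_mono_l.
Qed.

Lemma loc_mono (L : MultLattice) (p x y : L) : le x y -> le (loc L p x) (loc L p y).
Proof.
  intro H. unfold loc. apply sup_least. intros a (Ha & s & Hs & Hx & Hp).
  apply sup_ub. split; auto. exists s; repeat split; eauto using le_trans.
Qed.

Lemma loc_ext (L : MultLattice) (p x : L) : C_lattice L -> prime_el L p -> le x (loc L p x).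
Proof.
  intros HC Hp. apply decomp; auto. intros c Hc Hcx. apply sup_ub. split; auto.
  exists one. destruct HC as (H1 & _). repeat split; auto using one_not_le.
  rewrite mul_comm, mul_one; auto.
Qed.

Lemma loc_idem (L : MultLattice) (p x : L) : C_lattice L -> prime_el L p ->
  loc L p (loc L p x) = loc L p x.
Proof.
  intros HC Hp. apply le_antisym; [| apply loc_ext; auto].
  unfold loc at 1. apply sup_least. intros a (Ha & s & Hs & Hx & Hsp).
  pose proof HC as (_ & Hm & _).
  destruct (F L p x (mul a s) HC Hp (Hm _ _ Ha Hs) Hx) as (t & Ht & Htp & Hat).
  apply sup_ub. split; auto. exists (mul s t). repeat split; auto using prod_not_le.
  rewrite mul_assoc; auto.
Qed.

Lemma loc_mul_le (L : MultLattice) (p x y : L) : C_lattice L -> prime_el L p ->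
  le (mul (loc L p x) (loc L p y)) (loc L p (mul x y)).
Proof.
  intros HC Hp. pose proof HC as (_ & Hm & _).
  unfold loc at 2. rewrite mul_sup. apply sup_least. intros z (d & (Hd & t & Ht & Hdt & Htp) & ->).
  rewrite mul_comm. unfold loc at 1. rewrite mul_sup. apply sup_least.
  intros z (c & (Hc & u & Hu & Hcu & Hup) & ->).
  apply sup_ub. split; auto. exists (mul t u). repeat split; auto using prod_not_le.
  assert (E : mul (mul d c) (mul t u) = mul (mul d t) (mul c u)).
  { rewrite !mul_assoc. f_equal. rewrite <- !mul_assoc. f_equal. apply mul_comm. }
  rewrite E, (mul_comm _ x y). apply mul_mono2; auto.
Qed.

Lemma loc_mul (L : MultLattice) (p x y : L) : C_lattice L -> prime_el L p ->
  loc L p (mul (loc L p x) (loc L p y)) = loc L p (mul x y).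
Proof.
  intros HC Hp. pose proof HC as (_ & Hm & _). apply le_antisym.
  - unfold loc at 1. apply sup_least. intros a (Ha & s & Hs & Hx & Hsp).
    pose proof (le_trans _ _ _ _ Hx (loc_mul_le L p x y HC Hp)) as H.
    destruct (F L p _ (mul a s) HC Hp (Hm _ _ Ha Hs) H) as (t & Ht & Htp & Hat).
    apply sup_ub. split; auto. exists (mul s t). repeat split; auto using prod_not_le.
    rewrite mul_assoc; auto.
  - apply loc_mono, mul_mono2; apply loc_ext; auto.
Qed.

Theorem lemma2p6 (L : MultLattice) (p : L) :
  C_lattice L -> sharp L -> prime_el L p -> loc_sharp L p.
Proof.
  intros HC Hs Hp a1 a2 b H1 H2 [z Hb] Hle.
  assert (Hl : le (mul a1 a2) b) by (apply (le_trans _ _ (loc L p (mul a1 a2))); [apply loc_ext; auto | exact Hle]).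
  destruct (Hs a1 a2 b I I I Hl) as (c1 & c2 & _ & _ & Hc1 & Hc2 & Hbc).
  exists (loc L p c1), (loc L p c2). repeat split.
  - exists c1; auto.
  - exists c2; auto.
  - eapply le_trans; [exact Hc1 | apply loc_ext; auto].
  - eapply le_trans; [exact Hc2 | apply loc_ext; auto].
  - rewrite loc_mul by auto. rewrite <- Hbc, Hb. symmetry. apply loc_idem; auto.
Qed.
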